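(* For any integer $t>0$, any integer-valued function $f$ with $f(n)\in O(n^t)$, and any desired bound $\varepsilon_{\mathrm{premature}}>0$, there exists a (two-way) probabilistic finite automaton whose expected runtime on inputs of length $n$ is in $O(n^{t+1})$, and such that, on every input of length $n$, the probability that this machine halts in fewer than $f(n)$ time-steps is at most $\varepsilon_{\mathrm{premature}}$.
   Context: A (two-way) probabilistic finite automaton is a finite-state machine with a single read-only head on an input tape containing $\rhd w\lhd$ (with $\rhd,\lhd$ end-markers), starting on $\rhd$, which in each step may flip a fair coin and, depending on its state, the scanned symbol and the coin outcome, changes state and moves its head one cell left, right, or not at all; it has no work tape and no interaction with any other party. $n$ denotes the length of the input string $w$. *)

(* Defs.v *)
From HB Require Import structures.
From mathcomp Require Import all_boot all_order all_algebra.
From mathcomp Require Import reals.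
Set Implicit Arguments. Unset Strict Implicit. Unset Printing Implicit Defensive.
Import Order.TTheory GRing.Theory Num.Theory.
Local Open Scope ring_scope.

Inductive move := MoveL | MoveS | MoveR.

Inductive tapesym (Sigma : Type) := TLeft | TRight | TSym of Sigma.
Arguments TLeft {Sigma}. Arguments TRight {Sigma}.

Record pfa (Sigma : finType) := PFA {
  pfa_state : finType;
  pfa_start : pfa_state;
  pfa_halting : pred pfa_state;
  pfa_delta : pfa_state -> tapesym Sigma -> bool -> pfa_state * move
}.
Arguments pfa_state {Sigma} p.
Arguments pfa_start {Sigma} p.
Arguments pfa_halting {Sigma} p.
Arguments pfa_delta {Sigma} p.

Section Semantics.
Variables (Sigma : finType) (M : pfa Sigma) (w : seq Sigma).

(* Tape contents |> w <| ; cell 0 is |>, cells 1..n hold w, cell n+1 is <|. *)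
Definition cell (i : nat) : tapesym Sigma :=
  if i == 0%N then TLeft
  else match nth None (map Some w) i.-1 with Some a => TSym a | None => TRight end.

Definition config := (pfa_state M * nat)%type.

(* One step; halting states are absorbing. The head never leaves the
   end-markers (moves beyond them are clamped). *)
Definition step (c : config) (b : bool) : config :=
  let: (q, i) := c in
  if pfa_halting M q then (q, i) else
  let: (q', m) := pfa_delta M q (cell i) b in
  (q', match m with
       | MoveL => i.-1
       | MoveS => i
       | MoveR => if (i <= size w)%N then i.+1 else i
       end).

Fixpoint run (coins : nat -> bool) (k : nat) : config :=
  match k with
  | 0%N => (pfa_start M, 0%N)
  | k'.+1 => step (run coins k') (coins k')
  end.

Definition coins_of (m : nat) (s : {ffun 'I_m -> bool}) : nat -> bool :=
  fun i => match insub i with Some j => s j | None => false end.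

Variable R : realType.

(* P(runtime > k): fraction of the 2^k coin strings of length k after which
   the machine has not yet halted. *)
Definition prob_running_after (k : nat) : R :=
  (#|[set s : {ffun 'I_k -> bool} | ~~ pfa_halting M (run (coins_of s) k).1]|%:R)
  / (2 ^+ k).

(* P(runtime < m): the machine reaches a halting state at some step j < m. *)
Definition prob_halts_before (m : nat) : R :=
  (#|[set s : {ffun 'I_m -> bool} |
      [exists j : 'I_m, pfa_halting M (run (coins_of s) j).1]]|%:R)
  / (2 ^+ m).

Definition prob_halts_before_int (z : int) : R :=
  match z with Posz m => prob_halts_before m | Negz _ => 0 end.

(* Expected runtime E[T] = sum_{k>=0} P(T > k) is at most B,
   i.e. all partial sums of this nonnegative series are at most B. *)
Definition expected_runtime_le (B : R) : Prop :=
  forall K : nat, \sum_(k < K) prob_running_after k <= B.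

End Semantics.

(* Main.v *)
Require Import Defs.
From HB Require Import structures.
From mathcomp Require Import all_boot all_order all_algebra.
From mathcomp Require Import reals.
From mathcomp Require Import ring lra.
Set Implicit Arguments. Unset Strict Implicit. Unset Printing Implicit Defensive.
Import Order.TTheory GRing.Theory Num.Theory.
Local Open Scope ring_scope.

Section Gen.
Variables (Sigma : finType) (M : pfa Sigma) (w : seq Sigma) (R : realType).

Fixpoint rf (c : config M) (f : nat -> bool) (k : nat) : config M :=
  match k with 0%N => c | k'.+1 => step w (rf c f k') (f k') end.

Lemma run_rf f k : run M w f k = rf (pfa_start M, 0%N) f k.
Proof. by elim: k => //= k ->. Qed.

Lemma rf_ext c f g k : (forall i, f i = g i) -> rf c f k = rf c g k.
Proof. by move=> fg; elim: k => //= k ->; rewrite fg. Qed.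

Lemma rf_succ c f k : rf c f k.+1 = rf (step w c (f 0%N)) (fun i => f i.+1) k.
Proof. by elim: k => //= k <-. Qed.

Lemma step_halt c b : pfa_halting M c.1 -> step w c b = c.
Proof. by case: c => q i /= h; rewrite /step h. Qed.

Lemma coins_ofE k (s : {ffun 'I_k -> bool}) (j : 'I_k) : coins_of s j = s j.
Proof. by rewrite /coins_of valK. Qed.

Lemma coins_of_ge k (s : {ffun 'I_k -> bool}) i : (k <= i)%N -> coins_of s i = false.
Proof. by move=> h; rewrite /coins_of insubF // ltnNge h. Qed.

Definition fcons k (b : bool) (s : {ffun 'I_k -> bool}) : {ffun 'I_k.+1 -> bool} :=
  [ffun i : 'I_k.+1 => match val i with 0%N => b | i'.+1 => coins_of s i' end].

Lemma coins_of_fcons0 k b (s : {ffun 'I_k -> bool}) : coins_of (fcons b s) 0 = b.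
Proof. by rewrite (coins_ofE _ ord0) ffunE. Qed.

Lemma coins_of_fconsS k b (s : {ffun 'I_k -> bool}) i :
  coins_of (fcons b s) i.+1 = coins_of s i.
Proof.
case: (ltnP i k) => h.
  by rewrite (coins_ofE _ (Ordinal (h : i.+1 < k.+1)%N)) ffunE.
by rewrite !coins_of_ge.
Qed.

Lemma rf_fcons c k b (s : {ffun 'I_k -> bool}) m :
  rf c (coins_of (fcons b s)) m.+1 = rf (step w c b) (coins_of s) m.
Proof.
rewrite rf_succ coins_of_fcons0; apply: rf_ext => i; exact: coins_of_fconsS.
Qed.

Definition E k (F : {ffun 'I_k -> bool} -> R) : R :=
  (\sum_(s : {ffun 'I_k -> bool}) F s) / 2 ^+ k.
Arguments E : clear implicits.

Lemma E_ext k F G : (forall s, F s = G s) -> E k F = E k G.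
Proof. by move=> FG; rewrite /E; congr (_ / _); apply: eq_bigr => s _. Qed.

Lemma E_S k F : E k.+1 F =
  (E k (fun s => F (fcons true s)) + E k (fun s => F (fcons false s))) / 2.
Proof.
rewrite /E.
have -> : \sum_(s : {ffun 'I_k.+1 -> bool}) F s =
    \sum_(p : bool * {ffun 'I_k -> bool}) F (fcons p.1 p.2).
  rewrite (reindex (fun p : bool * {ffun 'I_k -> bool} => fcons p.1 p.2)) //.
  exists (fun f : {ffun 'I_k.+1 -> bool} => (f ord0, [ffun j : 'I_k => f (lift ord0 j)])).
    move=> [b s] _ /=; rewrite ffunE /=; congr pair.
    by apply/ffunP => j; rewrite !ffunE /= coins_ofE.
  move=> f _ /=; apply/ffunP => i; rewrite ffunE.
  case: i => [[|i] Hi] /=; first by congr (f _); apply: val_inj.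
  rewrite (coins_ofE _ (Ordinal (Hi : i < k)%N)) ffunE; congr (f _); exact: val_inj.
rewrite -(pair_bigA _ (fun b s => F (fcons b s))) big_bool /=.
rewrite exprS; field; by rewrite expf_neq0 // pnatr_eq0.
Qed.

Lemma card_E k (P : {ffun 'I_k -> bool} -> bool) :
  (#|[set s : {ffun 'I_k -> bool} | P s]|%:R) / 2 ^+ k = E k (fun s => (P s : nat)%:R).
Proof.
rewrite /E; congr (_ / _).
rewrite -sum1_card natr_sum big_mkcond /=; apply: eq_bigr => s _.
by rewrite inE; case: (P s).
Qed.

Lemma E_const k (x : R) : E k (fun _ => x) = x.
Proof.
rewrite /E sumr_const card_ffun card_bool card_ord -[x *+ _]mulr_natr natrX.
by rewrite mulfK // expf_neq0 // pnatr_eq0.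
Qed.

Definition rr (c : config M) k : R :=
  E k (fun s => (~~ pfa_halting M (rf c (coins_of s) k).1 : nat)%:R).

Definition hh (c : config M) m : R :=
  E m (fun s => ([exists j : 'I_m, pfa_halting M (rf c (coins_of s) j).1] : nat)%:R).

Lemma rr_0 c : rr c 0 = (~~ pfa_halting M c.1 : nat)%:R.
Proof. by rewrite /rr (E_ext _ (G := fun _ => (~~ pfa_halting M c.1 : nat)%:R)) ?E_const. Qed.

Lemma rr_S c k : rr c k.+1 = (rr (step w c true) k + rr (step w c false) k) / 2.
Proof. by rewrite /rr E_S; congr ((_ + _) / _); apply: E_ext => s; rewrite rf_fcons. Qed.

Lemma hh_0 c : hh c 0 = 0.
Proof.
rewrite /hh (E_ext _ (G := fun _ => 0)) ?E_const // => s.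
by case: existsP => // -[[]].
Qed.

Lemma hh_S c m : hh c m.+1 = if pfa_halting M c.1 then 1
   else (hh (step w c true) m + hh (step w c false) m) / 2.
Proof.
case: ifP => hc.
  rewrite /hh (E_ext _ (G := fun _ => 1)) ?E_const // => s.
  by case: existsP => // -[]; exists ord0.
rewrite /hh E_S; congr ((_ + _) / _); apply: E_ext => s; congr ((nat_of_bool _)%:R);
  apply/existsP/existsP => -[j Hj].
- case: j Hj => [[|j] lt] Hj; first by rewrite /= hc in Hj.
  move: Hj; rewrite (_ : nat_of_ord (Ordinal lt) = j.+1) // rf_fcons => Hj.
  by exists (Ordinal (lt : j < m)%N).
- by move: Hj; rewrite -(rf_fcons _ _ s) => Hj; exists (Ordinal (ltn_ord j : j.+1 < m.+1)%N).
- case: j Hj => [[|j] lt] Hj; first by rewrite /= hc in Hj.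
  move: Hj; rewrite (_ : nat_of_ord (Ordinal lt) = j.+1) // rf_fcons => Hj.
  by exists (Ordinal (lt : j < m)%N).
- by move: Hj; rewrite -(rf_fcons _ _ s) => Hj; exists (Ordinal (ltn_ord j : j.+1 < m.+1)%N).
Qed.

Lemma V_bound (Inv : config M -> Prop) (V : config M -> R) :
  (forall c b, Inv c -> Inv (step w c b)) ->
  (forall c, Inv c -> 0 <= V c) ->
  (forall c, Inv c -> ~~ pfa_halting M c.1 ->
     1 + (V (step w c true) + V (step w c false)) / 2 <= V c) ->
  forall K c, Inv c -> \sum_(k < K) rr c k <= V c.
Proof.
move=> Hs H0 HV; elim=> [|K IH] c Ic; first by rewrite big_ord0 H0.
rewrite big_ord_recl rr_0.
under eq_bigr => k _ do rewrite /bump /= rr_S.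
rewrite -mulr_suml big_split /=.
have T := IH _ (Hs c true Ic); have F := IH _ (Hs c false Ic).
case: (boolP (pfa_halting M c.1)) => hc /=.
  rewrite !step_halt // in T F *.
  have := IH _ Ic; lra.
have := HV c Ic hc; lra.
Qed.

Lemma W_bound (Inv : config M -> Prop) (W : config M -> nat -> R) :
  (forall c b, Inv c -> Inv (step w c b)) ->
  (forall c, Inv c -> 0 <= W c 0%N) ->
  (forall c m, Inv c -> pfa_halting M c.1 -> 1 <= W c m.+1) ->
  (forall c m, Inv c -> ~~ pfa_halting M c.1 ->
     (W (step w c true) m + W (step w c false) m) / 2 <= W c m.+1) ->
  forall m c, Inv c -> hh c m <= W c m.
Proof.
move=> Hs H0 H1 HW; elim=> [|m IH] c Ic; first by rewrite hh_0 H0.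
rewrite hh_S; case: ifP => hc; first exact: H1.
have T := IH _ (Hs c true Ic); have F := IH _ (Hs c false Ic).
have := HW c m Ic (negbT hc); lra.
Qed.

Lemma running_rr k : prob_running_after M w R k = rr (pfa_start M, 0%N) k.
Proof. by rewrite /prob_running_after card_E; apply: E_ext => s; rewrite run_rf. Qed.

Lemma halts_hh m : prob_halts_before M w R m = hh (pfa_start M, 0%N) m.
Proof.
rewrite /prob_halts_before card_E; apply: E_ext => s.
by congr ((nat_of_bool _)%:R); apply: eq_existsb => j; rewrite run_rf.
Qed.

End Gen.
Inductive st (K t : nat) := SP of 'I_K.+1 | SSR | SSL | ST of 'I_t.+1 | SB of 'I_t.+1 | SH.
Arguments SSR {K t}. Arguments SSL {K t}. Arguments SH {K t}.

Definition st_enc K t (x : st K t) : ('I_K.+1 + ('I_t.+1 + ('I_t.+1 + option bool)))%type :=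
  match x with
  | SP k => inl k | ST j => inr (inl j) | SB j => inr (inr (inl j))
  | SSR => inr (inr (inr (Some true))) | SSL => inr (inr (inr (Some false)))
  | SH => inr (inr (inr None)) end.
Definition st_dec K t (y : ('I_K.+1 + ('I_t.+1 + ('I_t.+1 + option bool)))%type) : st K t :=
  match y with
  | inl k => SP _ k | inr (inl j) => ST _ j | inr (inr (inl j)) => SB _ j
  | inr (inr (inr (Some true))) => SSR | inr (inr (inr (Some false))) => SSL
  | inr (inr (inr None)) => SH end.
Lemma st_encK K t : cancel (@st_enc K t) (@st_dec K t). Proof. by case. Qed.
HB.instance Definition _ K t := Finite.copy (st K t) (can_type (@st_encK K t)).

Section Mach.
Variables (Sigma : finType) (K t : nat).

Definition delta (q : st K t) (a : tapesym Sigma) (b : bool) : st K t * move :=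
 match q with
 | SP k => if (val k == 0)%N then (SSR, MoveS) else (SP _ (inord k.-1), MoveS)
 | SSR => match a with TRight => (SSL, MoveL) | _ => (SSR, MoveR) end
 | SSL => match a with TLeft => (ST _ ord0, MoveR) | _ => (SSL, MoveL) end
 | ST j => match a with TLeft => (SSR, MoveS) | TRight => (SB _ j, MoveL)
           | TSym _ => (ST _ j, if b then MoveR else MoveL) end
 | SB j => match a with
           | TLeft => if (j < t)%N then (ST _ (inord j.+1), MoveR) else (SH, MoveS)
           | _ => (SB _ j, MoveL) end
 | SH => (SH, MoveS) end.

Definition mach : pfa Sigma :=
  @PFA Sigma (st K t) (SP _ ord_max) (fun q => if q is SH then true else false) delta.

Variable w : seq Sigma.

Variant cell_spec i : tapesym Sigma -> Type :=
 | CellL of i = 0%N : cell_spec i TLeft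
 | CellS a of (0 < i <= size w)%N : cell_spec i (TSym a)
 | CellR of (size w < i)%N : cell_spec i TRight.

Lemma nth_none i : nth None (map Some w) i = None -> (size w <= i)%N.
Proof. by elim: w i => [|a w' IH] [|i] //= /IH. Qed.

Lemma nth_some i a : nth None (map Some w) i = Some a -> (i < size w)%N.
Proof. by elim: w i => [|b w' IH] [|i] //= /IH. Qed.

Lemma cellP i : cell_spec i (cell w i).
Proof.
rewrite /cell; case: i => [|i] /=; first exact: CellL.
case E: (nth None (map Some w) i) => [a|].
  by apply: CellS; rewrite /= (nth_some E).
by apply: CellR; rewrite ltnS (nth_none E).
Qed.

Definition Inv (c : config mach) := (c.2 <= (size w).+1)%N.

Lemma Inv_step c b : Inv c -> Inv (step w c b).
Proof.
case: c => q i; rewrite /Inv /step /=.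
case: (if q is SH then true else false) => //=.
case: (delta q (cell w i) b) => q' [] /=.
- by move=> h; apply: leq_trans (leq_pred _) h.
- by [].
- by case: ifP => // h _; rewrite ltnS.
Qed.


Variable R : realType.

Definition LL : R := ((size w).+1)%:R.
Definition cc : R := 3 * LL + 5.
Definition R0 : R := cc * LL ^+ t.+1.
Definition dl (j : nat) : R := cc * LL ^+ j - 4.
Definition XX : R := LL + R0 - cc + 4.

Definition Vf (c : config (mach)) : R :=
  let P := (c.2)%:R in
  match c.1 with
  | SP k => R0 + (val k)%:R + 1
  | SSR => R0 - P
  | SSL => P + 1 + XX
  | ST j => P * (LL - P) + (R0 + 1) - P * dl j
  | SB j => P + 1 + (if (j < t)%N then (LL - 1) + (R0 + 1) - dl j.+1 else 0)
  | SH => 0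
  end.

Lemma HL : LL = (size w)%:R + 1. Proof. by rewrite /LL natr1. Qed.

Lemma s0 : 0 <= (size w)%:R :> R. Proof. exact: ler0n. Qed.
Lemma L1 : 1 <= LL. Proof. rewrite HL; have := s0; lra. Qed.
Lemma c0 : 0 <= cc. Proof. rewrite /cc; have := L1; lra. Qed.

Lemma R0_ge : cc <= R0.
Proof.
rewrite /R0 -{1}[cc]mulr1 ler_wpM2l //; first exact: c0.
by rewrite exprn_ege1 //; exact: L1.
Qed.

Lemma V_step c : (0 < size w)%N -> Inv c -> ~~ pfa_halting mach c.1 ->
  1 + (Vf (step w c true) + Vf (step w c false)) / 2 <= Vf c.
Proof.
move=> w0; case: c => q p; rewrite /Inv /= => Hp.
have L2 : 2 <= LL.
  have : 1 <= (size w)%:R :> R by rewrite ler1n.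
  rewrite HL; lra.
have S0 := s0.
have R0c := R0_ge.
case: q => [k| | |j|j|] //= _; rewrite /step /=.
- have P0 : 0 <= p%:R :> R := ler0n _ _.
  case: eqP => [k0|k0] /=; rewrite /Vf /=.
    rewrite k0; lra.
  rewrite inordK; last by rewrite (leq_ltn_trans (leq_pred _)).
  case: (val k) k0 => // k' _ /=; rewrite -[k'.+1%:R]natr1; lra.
- case: cellP => [p0|a /andP[p0 pw]|pw]; rewrite /Vf /=.
  + subst p; rewrite /=; lra.
  + have P0 : 0 <= p%:R :> R := ler0n _ _.
    rewrite pw -[p.+1%:R]natr1; lra.
  + have -> : p = (size w).+1 by apply/eqP; rewrite eqn_leq Hp pw.
    rewrite /= -/LL HL /XX HL /cc HL; lra.
- case: cellP => [p0|a /andP[p0 pw]|pw]; rewrite /Vf /=.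
  + subst p; rewrite /= /XX /dl expr0; lra.
  + case: p p0 {pw Hp} => // p _ /=; rewrite -[p.+1%:R]natr1; lra.
  + case: p pw {Hp} => // p _ /=; rewrite -[p.+1%:R]natr1; lra.
- case: cellP => [p0|a /andP[p0 pw]|pw]; rewrite /Vf /=.
  + subst p; rewrite /=; lra.
  + rewrite pw; case: p p0 pw {Hp} => // p _ pw /=.
    rewrite -[p.+2%:R]natr1 -[p.+1%:R]natr1; lra.
  + have -> : p = (size w).+1 by apply/eqP; rewrite eqn_leq Hp pw.
    rewrite /= -/LL /dl.
    case: ifP => jt.
      rewrite exprS; have := HL; lra.
    have -> : val j = t by apply/eqP; rewrite eqn_leq -ltnS ltn_ord leqNgt jt.
    rewrite /R0 exprS; have := HL; lra.
- case: cellP => [p0|a /andP[p0 pw]|pw]; rewrite /Vf /=.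
  + subst p; rewrite /=; case: ifP => jt; last by rewrite /=; lra.
    rewrite /= (@inordK t j.+1) ?ltnS //; lra.
  + case: p p0 {pw Hp} => // p _ /=; rewrite -[p.+1%:R]natr1; lra.
  + case: p pw {Hp} => // p _ /=; rewrite -[p.+1%:R]natr1; lra.
Qed.


Lemma powc_le (j : nat) : (j <= t.+1)%N -> cc * LL ^+ j <= R0.
Proof. by move=> jt; rewrite /R0 ler_wpM2l ?c0 // ler_weXn2l // L1. Qed.

Lemma V_ge0 c : Inv c -> 0 <= Vf c.
Proof.
case: c => q p; rewrite /Inv /= => Hp.
have P0 : 0 <= p%:R :> R := ler0n _ _.
have PL : p%:R <= LL by rewrite /LL ler_nat.
have := R0_ge; have := c0; have := L1 => l1 C0 R0c.
case: q => [k| | |j|j|]; rewrite /Vf /=.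
- have := ler0n R k; lra.
- rewrite /cc in R0c; lra.
- rewrite /XX; lra.
- have h1 : p%:R * dl j <= R0.
    have cj : 0 <= cc * LL ^+ j by rewrite mulr_ge0 // exprn_ge0 // ?c0; lra.
    apply: (@le_trans _ _ (LL * (cc * LL ^+ j))).
      apply: (@le_trans _ _ (p%:R * (cc * LL ^+ j))).
        by rewrite ler_wpM2l // /dl; lra.
      by rewrite ler_wpM2r.
    rewrite mulrCA -exprS; apply: powc_le; exact: ltn_ord.
  have h2 : 0 <= p%:R * (LL - p%:R) by rewrite mulr_ge0 //; lra.
  lra.
- case: ifP => jt; last lra.
  have := powc_le (leqW jt); rewrite /dl; lra.
- lra.
Qed.

Definition bt : R := ((2 * LL + 1) * LL ^+ t.+1)^-1.
Definition aa : R := (LL ^+ t.+1)^-1.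

Lemma LLt_gt0 : 0 < LL ^+ t.+1. Proof. by rewrite exprn_gt0 // /LL ltr0n. Qed.
Lemma bt_ge0 : 0 <= bt.
Proof. by rewrite /bt invr_ge0 mulr_ge0 ?ltW ?LLt_gt0 //; have := L1; lra. Qed.
Lemma aa_ge0 : 0 <= aa. Proof. by rewrite /aa invr_ge0 ltW ?LLt_gt0. Qed.
Lemma bt_aa : (2 * LL + 1) * bt = aa.
Proof.
rewrite /bt /aa invfM mulrA divff ?mul1r //.
have := L1; rewrite -subr_eq0; lra.
Qed.
Lemma aa_1 : LL ^+ t.+1 * aa = 1.
Proof. by rewrite /aa divff // gt_eqF // LLt_gt0. Qed.

Definition Wf (c : config (mach)) (m : nat) : R :=
  let P := (c.2)%:R in
  match c.1 with
  | SP k => if (m <= k)%N then 0 else bt * (m - k)%:R + P * bt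
  | SSR => P * bt + bt * m%:R
  | SSL => (2 * LL - P) * bt + bt * m%:R
  | ST j => P * LL ^+ j * aa + bt * m%:R
  | SB j => LL ^+ j.+1 * aa + bt * m%:R
  | SH => 1 + bt * m%:R
  end.

Lemma W_step c m : Inv c -> ~~ pfa_halting mach c.1 ->
  (Wf (step w c true) m + Wf (step w c false) m) / 2 <= Wf c m.+1.
Proof.
case: c => q p; rewrite /Inv /= => Hp.
have b0 := bt_ge0; have a0 := aa_ge0; have ba := bt_aa; have a1 := aa_1.
have M0 : 0 <= m%:R :> R := ler0n _ _.
case: q => [k| | |j|j|] //= _; rewrite /step /=.
- case: eqP => [k0|k0] /=; rewrite /Wf /=.
    rewrite k0 ltn0 subn0 -[m.+1%:R]natr1; lra.
  rewrite inordK; last by rewrite (leq_ltn_trans (leq_pred _)).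
  case: (val k) k0 => // k' _ /=; rewrite ltnS subSS; case: ifP => _; lra.
- case: cellP => [p0|a /andP[p0 pw]|pw]; rewrite /Wf /=.
  + subst p; rewrite /= -[m.+1%:R]natr1; lra.
  + rewrite pw -[p.+1%:R]natr1 -[m.+1%:R]natr1; lra.
  + have -> : p = (size w).+1 by apply/eqP; rewrite eqn_leq Hp pw.
    rewrite /= -/LL -[m.+1%:R]natr1; have := HL; lra.
- case: cellP => [p0|a /andP[p0 pw]|pw]; rewrite /Wf /=.
  + subst p; rewrite /= expr0 -[m.+1%:R]natr1; lra.
  + case: p p0 {pw Hp} => // p _ /=; rewrite -[p.+1%:R]natr1 -[m.+1%:R]natr1; lra.
  + case: p pw {Hp} => // p _ /=; rewrite -[p.+1%:R]natr1 -[m.+1%:R]natr1; lra.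
- case: cellP => [p0|a /andP[p0 pw]|pw]; rewrite /Wf /=.
  + subst p; rewrite /= -[m.+1%:R]natr1.
    have : 0 <= bt by []. lra.
  + rewrite pw; case: p p0 pw {Hp} => // p _ pw /=.
    rewrite -[p.+2%:R]natr1 -[p.+1%:R]natr1 -[m.+1%:R]natr1; lra.
  + have -> : p = (size w).+1 by apply/eqP; rewrite eqn_leq Hp pw.
    rewrite /= -/LL -[m.+1%:R]natr1 exprS; lra.
- case: cellP => [p0|a /andP[p0 pw]|pw]; rewrite /Wf /=.
  + subst p; rewrite /=; case: ifP => jt.
      by rewrite /= (@inordK t j.+1) ?ltnS // -[m.+1%:R]natr1; lra.
    have -> : val j = t by apply/eqP; rewrite eqn_leq -ltnS ltn_ord leqNgt jt.
    rewrite /= -[m.+1%:R]natr1; lra.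
  + rewrite -[m.+1%:R]natr1; lra.
  + rewrite -[m.+1%:R]natr1; lra.
Qed.

Lemma W_halt c m : pfa_halting mach c.1 -> 1 <= Wf c m.+1.
Proof.
case: c => [[]] //= p _; rewrite /Wf /=.
have := bt_ge0; have := ler0n R m.+1; move=> h1 h2.
have : 0 <= bt * m.+1%:R by rewrite mulr_ge0.
lra.
Qed.

Lemma W_ge0 c : Inv c -> 0 <= Wf c 0.
Proof.
case: c => q p; rewrite /Inv /= => Hp.
have P0 : 0 <= p%:R :> R := ler0n _ _.
have PL : p%:R <= LL by rewrite /LL ler_nat.
have b0 := bt_ge0; have a0 := aa_ge0.
have l1 := L1.
case: q => [k| | |j|j|]; rewrite /Wf /= ?mulr0 ?addr0 //.
- by rewrite mulr_ge0.
- by rewrite mulr_ge0 //; lra.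
- by rewrite !mulr_ge0 // exprn_ge0 //; lra.
- by rewrite !mulr_ge0 // exprn_ge0 //; lra.
Qed.

End Mach.

Unset Implicit Arguments. Set Strict Implicit.

Theorem lemma1 (R : realType) (Sigma : finType) (t : nat) (f : nat -> int) (eps : R) :
  (0 < t)%N ->
  (exists (C : R) (N : nat), forall n : nat, (N <= n)%N ->
      `|(f n)%:~R : R| <= C * (n%:R) ^+ t) ->
  0 < eps ->
  exists M : pfa Sigma,
    (exists (C : R) (N : nat), forall w : seq Sigma, (N <= size w)%N ->
        expected_runtime_le M w (C * (size w)%:R ^+ t.+1)) /\
    (forall w : seq Sigma, prob_halts_before_int M w R (f (size w)) <= eps).
Proof.
case: t => [|t] // _ [Cf [N Hf]] Heps.
set N' := maxn (maxn N 1) (Num.Def.archi_bound (`|Cf| / eps)).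
set K0 := (\max_(n < N') `|f n|%N)%N.
exists (mach Sigma K0 t); split.
- exists (11 * 2 ^+ t.+1 + K0%:R + 1), 1%N => w w1 K.
  under eq_bigr => k _ do rewrite running_rr.
  apply: le_trans.
    apply: (@V_bound _ _ w R (fun c => is_true (Inv w c)) (Vf w R)).
    + by move=> c b; apply: Inv_step.
    + by move=> c; apply: V_ge0.
    + by move=> c; apply: V_step.
    + by [].
  rewrite /Vf /= /R0 /cc.
  set n := (size w)%:R.
  have n1 : 1 <= n by rewrite /n ler1n.
  have HL' : LL w R = n + 1 by rewrite HL.
  rewrite HL'.
  have e1 : 3 * (n + 1) + 5 <= 11 * n by lra.
  have e2 : (n + 1) ^+ t.+1 <= 2 ^+ t.+1 * n ^+ t.+1.
    by rewrite -exprMn lerXn2r ?nnegrE //; lra.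
  have e3 : 1 <= n ^+ t.+2 by rewrite exprn_ege1.
  have e4 : (3 * (n + 1) + 5) * (n + 1) ^+ t.+1 <= 11 * n * (2 ^+ t.+1 * n ^+ t.+1).
    apply: ler_pM => //; first lra.
    by rewrite exprn_ge0 //; lra.
  have e5 : 11 * n * (2 ^+ t.+1 * n ^+ t.+1) = 11 * 2 ^+ t.+1 * n ^+ t.+2.
    by rewrite [n ^+ t.+2]exprS; ring.
  have e6 : (K0%:R + 1) * 1 <= (K0%:R + 1) * n ^+ t.+2.
    by rewrite ler_wpM2l //; have := ler0n R K0; lra.
  have k0 : 0 <= K0%:R :> R := ler0n _ _.
  nra.
- move=> w.
  case E: (f (size w)) => [m|m] /=; last exact: ltW.
  rewrite halts_hh.
  apply: le_trans.
    apply: (@W_bound _ _ w R (fun c => is_true (Inv w c)) (Wf w R)).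
    + by move=> c b; apply: Inv_step.
    + by move=> c; apply: W_ge0.
    + by move=> c m' _; apply: W_halt.
    + by move=> c m'; apply: W_step.
    + by [].
  rewrite /Wf /=.
  case: leqP => mK; first exact: ltW.
  have nN : (N' <= size w)%N.
    rewrite leqNgt; apply/negP => lt.
    have := @leq_bigmax 'I_N' (fun i : 'I_N' => `|f i|%N) (Ordinal lt).
    by rewrite /= E /= -/K0 leqNgt mK.
  have nN1 : (N <= size w)%N.
    by apply: leq_trans nN; rewrite /N' (leq_trans (leq_maxl N 1)) // leq_maxl.
  have nA : (Num.Def.archi_bound (`|Cf| / eps) <= size w)%N.
    by apply: leq_trans nN; rewrite /N' leq_maxr.
  have n1' : (1 <= size w)%N.
    by apply: leq_trans nN; rewrite /N' (leq_trans (leq_maxr N 1)) // leq_maxl.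
  have Hm : m%:R <= Cf * (size w)%:R ^+ t.+1.
    by have := Hf _ nN1; rewrite E normr_nat.
  set n := (size w)%:R in Hm *.
  have n1 : 1 <= n by rewrite /n ler1n.
  have HL' : LL w R = n + 1 by rewrite HL.
  have b0 : 0 <= bt t w R := bt_ge0 _ _ _.
  have Lt0 : 0 < (n + 1) ^+ t.+1 by rewrite exprn_gt0 //; lra.
  have key : bt t w R * (n + 1) ^+ t.+1 * (2 * (n + 1) + 1) = 1.
    rewrite /bt HL' -mulrA [_ * (2 * _ + 1)]mulrC mulVf //.
    by rewrite mulf_neq0 // ?gt_eqF //; lra.
  have mK' : (m - K0)%:R <= m%:R :> R by rewrite ler_nat leq_subr.
  have nL : n ^+ t.+1 <= (n + 1) ^+ t.+1 by rewrite lerXn2r ?nnegrE //; lra.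
  have nT : 1 <= n ^+ t.+1 by rewrite exprn_ege1.
  have m0 : 0 <= m%:R :> R := ler0n _ _.
  have Cf0 : 0 <= Cf.
    case: (lerP 0 Cf) => // Cn.
    have : Cf * n ^+ t.+1 <= Cf * 1 by rewrite ler_wnM2l //; lra.
    lra.
  have arch : `|Cf| / eps < n.
    apply: (lt_le_trans (archi_boundP _)).
      by rewrite divr_ge0 // ltW.
    by rewrite ler_nat.
  rewrite ltr_pdivrMr // in arch.
  have Cfa : Cf <= `|Cf| := ler_norm _.
  set z := bt t w R * (n + 1) ^+ t.+1 in key.
  have z0 : 0 <= z by rewrite /z mulr_ge0 // ltW.
  have s1 : bt t w R * (m - K0)%:R <= bt t w R * (Cf * (n + 1) ^+ t.+1).
    rewrite ler_wpM2l //; apply: (le_trans mK'); apply: (le_trans Hm).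
    by rewrite ler_wpM2l.
  have s2 : bt t w R * (Cf * (n + 1) ^+ t.+1) = Cf * z by rewrite /z; ring.
  have s3 : Cf * z <= (2 * (n + 1) + 1) * eps * z.
    by rewrite ler_wpM2r //; nra.
  have s4 : (2 * (n + 1) + 1) * eps * z = eps by rewrite mulrAC (mulrC _ z) key mul1r.
  rewrite mul0r addr0; lra.
Qed.
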